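(* Let $k\in\mathbb{N}$ and let $(E,d_E)$ be a properly $\mathsf{M}_k$-separated Bratteli diagram with $E^0=\bigsqcup_{n\ge1}V_n$, $V_n=H_n\sqcup\{y_n\}$, and $H=\bigsqcup_nH_n$. Let $G$ be the graph constructed from $(E,d_E)$ as follows. For $v\in H_n$ put $\delta(v)=d_E(v)-\sum_{e\in r_E^{-1}(v)}d_E(s_E(e))-1$, and $m(v)=|y_{n-1}E^*v|$ if $n\ge2$, $m(v)=0$ if $n=1$. Then $G^0=H\sqcup\{z_1,\dots,z_k\}\sqcup\{x_i^v: v\in H,1\le i\le\delta(v)\}$ and $G^1=\{e\in E^1: s_E(e)\in H\}\sqcup\{e_1,\dots,e_{k-1}\}\sqcup\{f_i^v: v\in H,1\le i\le m(v)\}\sqcup\{g_i^v: v\in H,1\le i\le\delta(v)\}$, where edges of $E$ keep their source and range, $e_i$ goes from $z_i$ to $z_k$, $f_i^v$ goes from $z_k$ to $v$, and $g_i^v$ goes from $x_i^v$ to $v$. Then for every $v\in H$, $d_E(v)=|\{\alpha\in G^*: r_G(\alpha)=v\}|$, where $G^*$ is the set of finite paths of $G$ (including vertices as paths of length $0$).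
   Context: A Bratteli diagram $(E,d_E)$ consists of a graph $E=(E^0,E^1,r_E,s_E)$ and $d_E\colon E^0\to\mathbb{N}$ such that $E$ has no sinks, $E^0=\bigsqcup_{n\ge1}W_n$ (levels) with each $W_n$ finite, each edge goes from some $W_n$ to $W_{n+1}$, and $d_E(v)\ge\sum_{e\in r_E^{-1}(v)}d_E(s_E(e))$. With $E^*$ the finite paths and $VE^*W$ the paths from set $V$ to set $W$ ($vE^*w$ for single vertices): $(E,d_E)$ is $\mathsf{M}_k$-separated if (1) $W_n=H_n\sqcup\{y_n\}$; (2) $H_nE^*y_{n+1}=\emptyset$; (3) $d_E(y_n)=k$; (4) $|y_nE^*y_{n+1}|=1$; (5) $y_nE^*H_{n+1}\ne\emptyset$, for all $n$; properly $\mathsf{M}_k$-separated if moreover (6) $d_E(v)>\sum_{e\in r_E^{-1}(v)}d_E(s_E(e))$ for all $n$ and $v\in H_n$. *)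

(* Defs.v *)
From mathcomp Require Import all_boot.
Set Implicit Arguments.
Unset Strict Implicit.
Unset Printing Implicit Defensive.

(* A finite path alpha is encoded as the pair (r(alpha), [:: alpha_1; ...; alpha_n])
   with r(alpha_1) = r(alpha) and s(alpha_i) = r(alpha_{i+1}); its source is s(alpha_n).
   The pair (v, [::]) is the length-0 path at the vertex v. *)
Section Paths.
Variables (V Ed : eqType) (s r : Ed -> V).

Fixpoint walk (v : V) (es : seq Ed) : bool :=
  if es is e :: es' then (r e == v) && walk (s e) es' else true.

Fixpoint wsrc (v : V) (es : seq Ed) : V :=
  if es is e :: es' then wsrc (s e) es' else v.

Definition fpath (p : V * seq Ed) : bool := walk p.1 p.2.
Definition prng (p : V * seq Ed) : V := p.1.
Definition psrc (p : V * seq Ed) : V := wsrc p.1 p.2.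

Definition paths_from_to (a b : V) (p : V * seq Ed) : bool :=
  [&& fpath p, psrc p == a & prng p == b].
End Paths.

Definition has_card (T : eqType) (P : T -> Prop) (n : nat) : Prop :=
  exists sq : seq T, [/\ uniq sq, size sq = n & forall x, x \in sq <-> P x].

(* lvl v = n means v \in W_n; rin v is a (duplicate-free) enumeration of r^{-1}(v). *)
Definition is_bratteli (V Ed : eqType) (s r : Ed -> V) (lvl d : V -> nat)
    (rin : V -> seq Ed) : Prop :=
  [/\ (forall v, 1 <= lvl v),
      (forall n, exists sq : seq V, forall v, lvl v = n <-> v \in sq),
      (forall e, lvl (r e) = (lvl (s e)).+1) &
      (forall v, exists e, s e = v)] /\
  (forall v, [/\ uniq (rin v), (forall e, e \in rin v <-> r e = v) &
                  \sum_(e <- rin v) d (s e) <= d v]).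

(* H = union of the H_n = W_n \ {y_n} *)
Definition inH (V : eqType) (lvl : V -> nat) (y : nat -> V) (v : V) : bool :=
  v != y (lvl v).

Definition Mk_separated (V Ed : eqType) (s r : Ed -> V) (lvl d : V -> nat)
    (y : nat -> V) (k : nat) : Prop :=
  forall n, 1 <= n ->
  [/\ lvl (y n) = n,
      (forall u p, lvl u = n -> u != y n -> ~~ paths_from_to s r u (y n.+1) p),
      d (y n) = k,
      has_card (paths_from_to s r (y n) (y n.+1)) 1 &
      exists u p, [/\ lvl u = n.+1, u != y n.+1 & paths_from_to s r (y n) u p]].

Definition properly_Mk_separated (V Ed : eqType) (s r : Ed -> V) (lvl d : V -> nat)
    (rin : V -> seq Ed) (y : nat -> V) (k : nat) : Prop :=
  Mk_separated s r lvl d y k /\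
  (forall v, inH lvl y v -> \sum_(e <- rin v) d (s e) < d v).

(* Vertices: inl (inl v) = v \in H ; inl (inr i) = z_i ; inr (v, i) = x_i^v *)
Definition GV (V : eqType) := (V + nat + (V * nat))%type.
(* Edges: e \in E^1 ; e_i ; f_i^v ; g_i^v *)
Definition GE (V Ed : eqType) := (Ed + nat + (V * nat) + (V * nat))%type.

Section Gconstr.
Variables (V Ed : eqType) (s r : Ed -> V) (lvl d : V -> nat) (rin : V -> seq Ed)
  (y : nat -> V) (k : nat) (m : V -> nat).

Definition GH (v : V) : GV V := inl (inl v).
Definition Gz (i : nat) : GV V := inl (inr i).
Definition Gx (v : V) (i : nat) : GV V := inr (v, i).

Definition delta (v : V) : nat := d v - \sum_(e <- rin v) d (s e) - 1.

Definition Gsrc (a : GE V Ed) : GV V :=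
  match a with
  | inl (inl (inl e)) => GH (s e)
  | inl (inl (inr i)) => Gz i
  | inl (inr (v, i)) => Gz k
  | inr (v, i) => Gx v i
  end.

Definition Grng (a : GE V Ed) : GV V :=
  match a with
  | inl (inl (inl e)) => GH (r e)
  | inl (inl (inr i)) => Gz k
  | inl (inr (v, i)) => GH v
  | inr (v, i) => GH v
  end.

Definition Gvert (x : GV V) : bool :=
  match x with
  | inl (inl v) => inH lvl y v
  | inl (inr i) => (1 <= i <= k)
  | inr (v, i) => inH lvl y v && (1 <= i <= delta v)
  end.

Definition Gedge (a : GE V Ed) : bool :=
  match a with
  | inl (inl (inl e)) => inH lvl y (s e)
  | inl (inl (inr i)) => (1 <= i <= k.-1)
  | inl (inr (v, i)) => inH lvl y v && (1 <= i <= m v)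
  | inr (v, i) => inH lvl y v && (1 <= i <= delta v)
  end.

Definition Gpath (p : GV V * seq (GE V Ed)) : bool :=
  [&& fpath Gsrc Grng p, Gvert p.1 & all Gedge p.2].
End Gconstr.

(* Main.v *)
Require Import Defs.
From mathcomp Require Import all_boot.
From mathcomp Require Import zify.

Lemma sum_const_count (T : eqType) (r0 : seq T) (P : pred T) c :
  \sum_(i <- r0 | P i) c = count P r0 * c.
Proof. elim: r0 => [|a l IH]; first by rewrite big_nil.
rewrite big_cons IH /=; case: (P a) => /=; lia. Qed.

Lemma has_card_uniq (T : eqType) (P : T -> Prop) n1 n2 :
  has_card P n1 -> has_card P n2 -> n1 = n2.
Proof.
move=> [s1 [u1 <- m1]] [s2 [u2 <- m2]].
apply: perm_size; apply: uniq_perm => // x.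
apply/idP/idP => H; [apply/m2/m1 | apply/m1/m2] => //.
Qed.

Lemma walk_lvl (V Ed : eqType) (s r : Ed -> V) (lvl : V -> nat) :
  (forall e, lvl (r e) = (lvl (s e)).+1) ->
  forall es x, walk s r x es -> lvl (wsrc s x es) + size es = lvl x.
Proof.
move=> hl; elim=> [|e es IH] x //=; first by rewrite addn0.
move=> /andP [/eqP <- hw]; rewrite hl -(IH _ hw); lia.
Qed.

Lemma disj_map (T1 T2 U : eqType) (f : T1 -> U) (g : T2 -> U) l1 l2 :
  (forall a b, f a <> g b) -> ~~ has (fun x => x \in map f l1) (map g l2).
Proof.
move=> H; rewrite has_map; apply/hasPn => b _ /=; apply/mapP => -[a _ E].
exact: (H a b (esym E)).
Qed.

Section S.
Variables (V Ed : eqType) (s r : Ed -> V) (lvl d : V -> nat)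
    (rin : V -> seq Ed) (y : nat -> V) (k : nat) (m : V -> nat).
Hypothesis kpos : 0 < k.

Notation GP := (Gpath s r lvl d rin y k m).
Notation Gs := (Gsrc s k).
Notation Gr := (Grng r k).
Notation Gv := (Gvert s lvl d rin y k).
Notation Ge := (Gedge s lvl d rin y k m).

Definition cnt (w : GV V) (n : nat) := exists L : seq (seq (GE V Ed)),
  [/\ uniq L, size L = n & forall es, es \in L <-> GP (w, es)].

Lemma Gedge_src a : Ge a -> Gv (Gs a).
Proof.
case: a => [[[e|i]|[u i]]|[u i]] //=; try lia.
 
Qed.

Lemma Gpath_cons w a es : Gv w ->
  GP (w, a :: es) = [&& Gr a == w, Ge a & GP (Gs a, es)].
Proof.
move=> hw; rewrite /Gpath /Defs.fpath /= hw.
case: (Gr a == w) => //=; case he: (Ge a) => /=; last by rewrite andbF.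
by move: (Gedge_src _ he); rewrite /Gpath /Defs.fpath /= => ->.
Qed.

Lemma sum_cnt (A : seq (GE V Ed)) (f : GE V Ed -> nat) : uniq A ->
  (forall a, a \in A -> cnt (Gs a) (f a)) ->
  exists L, [/\ uniq L, size L = \sum_(a <- A) f a &
    forall es, es \in L <-> exists a es', [/\ es = a :: es', a \in A & GP (Gs a, es')]].
Proof.
elim: A => [|a A IH] /=.
  move=> _ _; exists [::]; split => //; first by rewrite big_nil.
  by move=> es; split => // [[b [es' [_ H _]]]].
move=> /andP [aA uA] H.
have [L1 [u1 s1 m1]] := H a (mem_head _ _).
have [L2 [u2 s2 m2]] : exists L, [/\ uniq L, size L = \sum_(a <- A) f a &
    forall es, es \in L <-> exists a es', [/\ es = a :: es', a \in A & GP (Gs a, es')]].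
  by apply: IH => // b hb; apply: H; rewrite inE hb orbT.
exists ([seq a :: es | es <- L1] ++ L2); split.
- rewrite cat_uniq u2 andbT map_inj_uniq //=; last by move=> x1 x2 [].
rewrite u1 /=;   apply/hasPn => es hes; apply/mapP => [[es' _ Heq]].
  have [b [es'' [E hb _]]] := (m2 es).1 hes.
  move: Heq; rewrite E => -[Eb _]; subst b.
  by rewrite hb in aA.
- by rewrite size_cat size_map s1 s2 big_cons.
- move=> es; rewrite mem_cat; split.
  + case/orP => [/mapP [es' h1 ->]|h2].
      by exists a, es'; split => //; [exact: mem_head | apply/m1].
    have [b [es'' [E hb hp]]] := (m2 es).1 h2.
    by exists b, es''; split => //; rewrite inE hb orbT.
  + move=> [b [es' [-> hb hp]]].
    move: hb; rewrite inE => /orP [/eqP Eb|hb].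
      by subst b; apply/orP; left; apply/mapP; exists es' => //; apply/m1.
    by apply/orP; right; apply/m2; exists b, es'.
Qed.

Lemma cnt_step w A f : Gv w -> uniq A ->
  (forall a, a \in A <-> Ge a && (Gr a == w)) ->
  (forall a, a \in A -> cnt (Gs a) (f a)) ->
  cnt w (\sum_(a <- A) f a).+1.
Proof.
move=> hw uA mA hc.
have [L [u sz mL]] := sum_cnt _ _ uA hc.
exists ([::] :: L); split; [|by rewrite /= sz|].
- rewrite /= u andbT; apply/negP => /mL [b [es' [E _ _]]] //.
- case=> [|a es'].
    by rewrite inE eqxx; split => // _; rewrite /Gpath /Defs.fpath /= hw.
  rewrite inE /= Gpath_cons // mL; split.
  + move=> [b [es'' [[-> ->] hb hp]]].
    by move/mA: hb => /andP [-> ->].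
  + case/and3P => h1 h2 h3; exists a, es'; split => //.
    by apply/mA; rewrite h1 h2.
Qed.

Lemma sum_const (T : eqType) (r0 : seq T) c : \sum_(i <- r0) c = size r0 * c.
Proof. elim: r0 => [|a l IH]; first by rewrite big_nil.
rewrite big_cons IH /=; lia. Qed.

Definition wt (a : GE V Ed) : nat := match a with
 | inl (inl (inl e)) => d (s e) | inl (inl (inr _)) => 1 | inl (inr _) => k | inr _ => 1 end.

Lemma cnt_x u i : Gv (Gx u i) -> cnt (Gx u i) 1.
Proof.
move=> hv; have := cnt_step _ [::] wt hv (isT : uniq [::]).
rewrite big_nil; apply.
  by case=> [[[e|j]|[u' j]]|[u' j]]; rewrite in_nil /= andbF.
by [].
Qed.

Lemma cnt_z j : 0 < j < k -> cnt (Gz V j) 1.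
Proof.
move=> hj; have hv : Gv (Gz V j) by rewrite /=; lia.
have ne : (Gz V k == Gz V j) = false by apply/eqP => -[hkj]; lia.
have := cnt_step _ [::] wt hv (isT : uniq [::]).
rewrite big_nil; apply => //.
by case=> [[[e|j']|[u' j']]|[u' j']]; rewrite in_nil /= ?andbF ?ne ?andbF.
Qed.

Lemma cnt_zk : cnt (Gz V k) k.
Proof.
have hv : Gv (Gz V k) by rewrite /=; lia.
pose A := [seq (inl (inl (inr j)) : GE V Ed) | j <- iota 1 k.-1].
have uA : uniq A by rewrite map_inj_uniq ?iota_uniq // => x1 x2 [].
have := cnt_step _ A wt hv uA.
have -> : (\sum_(a <- A) wt a).+1 = k.
  by rewrite big_map /= sum_const size_iota; lia.
apply.
- case=> [[[e|j']|[u' j']]|[u' j']] /=; split => //;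
    try (by move/mapP => [x _]); try (by case/andP => _ /eqP).
  + by move/mapP => [x hx [->]]; rewrite mem_iota in hx; rewrite eqxx andbT; lia.
  + move=> /andP [h _]; apply/mapP; exists j' => //; rewrite mem_iota; lia.
- move=> a /mapP [j hj ->] /=; apply: cnt_z; rewrite mem_iota in hj; lia.
Qed.

Hypothesis hb : is_bratteli s r lvl d rin.
Hypothesis hsep : properly_Mk_separated s r lvl d rin y k.
Hypothesis hm : forall v, inH lvl y v ->
     (lvl v = 1 -> m v = 0) /\
     (2 <= lvl v -> has_card (paths_from_to s r (y (lvl v).-1) v) (m v)).

Lemma count_y v : inH lvl y v -> count (fun e => ~~ inH lvl y (s e)) (rin v) = m v.
Proof.
move=> hv; have [[hl1 _ hlr _] hrin] := hb.
have [hsep1 _] := hsep.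
have [hm1 hm2] := hm v hv.
have [urin mrin _] := hrin v.
have hlin : forall e, e \in rin v -> lvl (s e) = (lvl v).-1.
  by move=> e /mrin he; rewrite -he hlr.
case: (ltnP 1 (lvl v)) => hlv; last first.
  have -> : rin v = [::].
    case E: (rin v) => [|e l] //.
    have := hlin e; rewrite E mem_head => /(_ isT).
    have := hl1 (s e); lia.
  rewrite hm1 //; have := hl1 v; lia.
have [hy1 _ _ _ _] := hsep1 (lvl v).-1 ltac:(lia).
rewrite -(@eq_in_count _ (fun e => s e == y (lvl v).-1)); last first.
  by move=> e he /=; rewrite /inH negbK hlin.
rewrite -size_filter; symmetry; apply: has_card_uniq (hm2 hlv) _.
exists [seq (v, [:: e]) | e <- rin v & s e == y (lvl v).-1]; split.
- by rewrite map_inj_uniq ?filter_uniq // => e1 e2 [].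
- by rewrite size_map.
- case=> [x es]; split.
  + move/mapP => [e]; rewrite mem_filter => /andP [/eqP hs /mrin hr] [-> ->].
    by rewrite /paths_from_to /Defs.fpath /psrc /prng /= hr hs !eqxx.
  + case/and3P; rewrite /Defs.fpath /psrc /prng /= => hw /eqP hs /eqP hx.
    subst x.
    have := @walk_lvl _ _ s r lvl hlr _ _ hw; rewrite hs hy1.
    case: es hw hs => [|e [|e' es]] /=; try lia.
    move=> /andP [/eqP hr _] hs _; apply/mapP; exists e => //.
    by rewrite mem_filter hs eqxx /=; apply/mrin.
Qed.

Lemma main_cnt n : forall v, lvl v <= n -> inH lvl y v -> cnt (GH v) (d v).
Proof.
have [[hl1 _ hlr _] hrin] := hb.
have [hsep1 hsep2] := hsep.
elim: n => [|n IH] v hl hv; first by have := hl1 v; lia.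
have [urin mrin hsum] := hrin v.
pose A := [seq (inl (inl (inl e)) : GE V Ed) | e <- rin v & inH lvl y (s e)] ++
          [seq (inl (inr (v, i)) : GE V Ed) | i <- iota 1 (m v)] ++
          [seq (inr (v, i) : GE V Ed) | i <- iota 1 (delta s d rin v)].
have uA : uniq A.
  rewrite !cat_uniq !map_inj_uniq ?filter_uniq ?iota_uniq //=; try by move=> ? ? [].
  rewrite has_cat negb_or -andbA andbT; apply/and3P; split; apply/hasPn => x hx; case/mapP: hx => ? _ ->; apply/mapP => -[? _ E]; discriminate.
have hv' : Gv (GH v) by [].
have GH_eq : forall a b : V, (GH a == GH b) = (a == b).
  by move=> a b; apply/eqP/eqP => [[]|->].
have mA : forall a, a \in A <-> Ge a && (Gr a == GH v).
  case=> [[[e|j]|[u i]]|[u i]] /=; rewrite !mem_cat ?GH_eq; split.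
  - case/or3P => /mapP [x hx] // [?]; subst.
    by move: hx; rewrite mem_filter => /andP [-> /mrin ->]; rewrite eqxx.
  - case/andP => h1 /eqP h2; apply/or3P; constructor 1; apply/mapP; exists e => //.
    by rewrite mem_filter h1; apply/mrin.
  - by case/or3P => /mapP [x hx].
  - by case/andP => _ /eqP.
  - case/or3P => /mapP [x hx] // [? ?]; subst; move: hx; rewrite mem_iota => hx.
    by rewrite hv eqxx /=; lia.
  - case/andP => /and3P [h1 h2 h3] /eqP h4; subst u; apply/or3P; constructor 2.
    by apply/mapP; exists i => //; rewrite mem_iota; lia.
  - case/or3P => /mapP [x hx] // [? ?]; subst; move: hx; rewrite mem_iota => hx.
    by rewrite hv eqxx /=; lia.
  - case/andP => /and3P [h1 h2 h3] /eqP h4; subst u; apply/or3P; constructor 3.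
    by apply/mapP; exists i => //; rewrite mem_iota; lia.
have hc : forall a, a \in A -> cnt (Gs a) (wt a).
  move=> a; rewrite !mem_cat => /or3P [] /mapP [x hx ->] /=.
  - move: hx; rewrite mem_filter => /andP [h1 /mrin h2].
    apply: IH => //; move: hl; rewrite -h2 hlr; lia.
  - exact: cnt_zk.
  - apply: cnt_x; move: hx; rewrite /= mem_iota hv /=; lia.
have := cnt_step _ A wt hv' uA mA hc.
have [hsep1' _] := hsep.
suff -> : (\sum_(a <- A) wt a).+1 = d v by [].
rewrite !big_cat !big_map /= big_filter !sum_const !size_iota.
have eS : \sum_(e <- rin v) d (s e) =
    \sum_(e <- rin v | inH lvl y (s e)) d (s e) + m v * k.
  rewrite (bigID (fun e => inH lvl y (s e))) /= -(count_y v hv) -sum_const_count.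
  congr (_ + _); rewrite big_seq_cond [RHS]big_seq_cond; apply: eq_bigr => e /andP [he hn].
  move: hn; rewrite /inH negbK => /eqP ->.
  by have [_ _ -> _ _] := hsep1' (lvl (s e)) (hl1 (s e)).
have := hsep2 v hv; rewrite /delta eS; lia.
Qed.
End S.

Theorem lemma5p5 (V Ed : eqType) (s r : Ed -> V) (lvl d : V -> nat)
    (rin : V -> seq Ed) (y : nat -> V) (k : nat) (m : V -> nat) :
  0 < k ->
  is_bratteli s r lvl d rin ->
  properly_Mk_separated s r lvl d rin y k ->
  (* m(v) = |y_{n-1} E^* v| for v \in H_n, n >= 2, and m(v) = 0 for v \in H_1 *)
  (forall v, inH lvl y v ->
     (lvl v = 1 -> m v = 0) /\
     (2 <= lvl v -> has_card (paths_from_to s r (y (lvl v).-1) v) (m v))) ->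
  forall v, inH lvl y v ->
    has_card (fun a => Gpath s r lvl d rin y k m a /\ prng a = GH v) (d v).
Proof.
move=> kpos hb hsep hm v hv.
have [L [uL sL mL]] := @main_cnt V Ed s r lvl d rin y k m kpos hb hsep hm (lvl v) v (leqnn _) hv.
exists [seq (GH v, es) | es <- L]; split.
- by rewrite map_inj_uniq // => ? ? [].
- by rewrite size_map.
- case=> [x es]; split.
  + by move/mapP => [es' h [-> ->]]; split => //; apply/mL.
  + move=> [hp hx]; rewrite /prng /= in hx; subst x.
    by apply/mapP; exists es => //; apply/mL.
Qed.
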